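(* Let $b\in\mathbb Z_T$ be nonzero and let $B_1=\cdots=B_s=\{0,b\}$ be $s$ identical size-$2$ subsets of $\mathbb Z_T$ with $s\ge T^2$. Then the multiset $B_1+B_2+\cdots+B_s$ has bias at most $4|H|/s^{1/2}$ with respect to the subgroup $H=\langle b\rangle$.
   Context: $\mathbb Z_T$ is the additive cyclic group of order $T$. For multisets $A,B$, $A+B=\{a+b:a\in A,b\in B\}$ as a multiset; $\mu_A(x)$ is the multiplicity of $x$ in $A$. A multiset $A$ has bias at most $\epsilon$ with respect to a subgroup $H$ if $\mu_A(a)\le(1+\epsilon)\mu_A(a+h)$ for all $a\in A$ and all $h\in H$. $\langle b\rangle$ is the subgroup generated by $b$. *)

(* Defs.v *)
From HB Require Import structures.
From mathcomp Require Import all_boot all_order all_algebra all_fingroup.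
From mathcomp Require Import reals.
Set Implicit Arguments. Unset Strict Implicit. Unset Printing Implicit Defensive.
Import Order.TTheory GRing.Theory Num.Theory.

(* A finite multiset over a finite abelian group V is represented by its
   multiplicity function mu_A : V -> nat. *)
Definition mset (V : finZmodType) := V -> nat.

Definition mset_of_set (V : finZmodType) (S : {set V}) : mset V :=
  fun x => (x \in S) : nat.

Definition msum (V : finZmodType) (A B : mset V) : mset V :=
  fun x => \sum_(a : V) \sum_(c : V) ((a + c == x)%R * (A a * B c))%N.

Definition msum_seq (V : finZmodType) (Bs : seq (mset V)) : mset V :=
  foldr (@msum V) (mset_of_set [set 0%R]) Bs.

Definition bias_at_most (R : realType) (V : finZmodType) (A : mset V)
  (H : {set V}) (eps : R) : Prop :=
  forall a : V, (0 < A a)%N -> forall h : V, h \in H ->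
    ((A a)%:R <= (1 + eps) * (A (a + h)%R)%:R)%R.

(* Main.v *)
Require Import Defs.
From HB Require Import structures.
From mathcomp Require Import all_boot all_order all_algebra all_fingroup.
From mathcomp Require Import reals.
From mathcomp Require Import trigo.
From mathcomp Require Import cyclic.
From mathcomp Require Import ring lra zify.
Import Order.TTheory GRing.Theory Num.Theory.

Module H.
Local Open Scope ring_scope.

Section Trig.
Variable R : realType.

Lemma cos_uv (u v : R) : cos (u - v) + cos (u + v) = 2 * cos u * cos v.
Proof. rewrite cosB cosD; ring. Qed.

Lemma binom_cos (s : nat) (th ph : R) :
  \sum_(k < s.+1) ('C(s, k))%:R * cos (k%:R * th + ph)
  = (2 * cos (th / 2)) ^+ s * cos (s%:R * th / 2 + ph).
Proof.
elim: s ph => [|s IH] ph.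
  by rewrite big_ord_recl big_ord0 bin0 addr0 expr0 mul1r mul1r /= mulr0n !mul0r.
rewrite big_ord_recl bin0 mul1r.
under eq_bigr => i _ do rewrite binS natrD mulrDl.
rewrite big_split /=.
have E1 : \sum_(i < s.+1) ('C(s, i))%:R * cos ((bump 0 i)%:R * th + ph)
   = \sum_(i < s.+1) ('C(s, i))%:R * cos (i%:R * th + (ph + th)).
  apply: eq_bigr => i _; congr (_ * cos _).
  rewrite /bump /= add1n -addn1 natrD; ring.
rewrite E1 IH.
have E2 : cos (0%:R * th + ph) + \sum_(i < s.+1) ('C(s, i.+1))%:R * cos ((bump 0 i)%:R * th + ph)
   = \sum_(i < s.+1) ('C(s, i))%:R * cos (i%:R * th + ph).
  transitivity (\sum_(i < s.+2) ('C(s, i))%:R * cos (i%:R * th + ph)); last first.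
    by rewrite big_ord_recr /= bin_small // mul0r addr0.
  by rewrite [in RHS]big_ord_recl /= bin0 mul1r.
rewrite addrA E2 IH -mulrDr.
set u := (s.+1)%:R * th / 2 + ph.
have -> : s%:R * th / 2 + ph = u - th / 2 by rewrite /u -addn1 natrD; field.
have -> : s%:R * th / 2 + (ph + th) = u + th / 2 by rewrite /u -addn1 natrD; field.
rewrite cos_uv exprS; ring.
Qed.
End Trig.

Section Trig.
Variable R : realType.

Lemma cos_2pin (K : nat) : cos ((pi *+ 2) *+ K) = 1 :> R.
Proof. by rewrite -[X in cos X]add0r (periodicn (@cosD2pi R)) cos0. Qed.

Lemma sin_ne0 (n m : nat) : (0 < n)%N -> ~~ (n %| m)%N ->
  sin (pi * m%:R / n%:R) != 0 :> R.
Proof.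
move=> n0 ndm.
have n0' : (0 : R) < n%:R by rewrite ltr0n.
rewrite (divn_eq m n) natrD natrM.
have -> : pi * ((m %/ n)%:R * n%:R + (m %% n)%:R) / n%:R
   = pi * (m %% n)%:R / n%:R + pi *+ (m %/ n) :> R.
  rewrite -mulr_natr; field; by rewrite gt_eqF.
rewrite (alternatingn (@sinDpi R)) mulf_eq0 negb_or signr_eq0 /=.
apply/lt0r_neq0/sin_gt0_pi; apply/andP; split.
  apply: divr_gt0 => //; apply: mulr_gt0; first exact: pi_gt0.
  by rewrite ltr0n lt0n.
rewrite ltr_pdivrMr // ltr_pM2l ?pi_gt0 // ltr_nat ltn_pmod //.
Qed.

End Trig.
Section Trig2.
Variable R : realType.
Lemma cos_orth (n m : nat) : (0 < n)%N ->
  \sum_(t < n) cos (t%:R * (pi *+ 2 * m%:R / n%:R)) = if (n %| m)%N then n%:R else 0 :> R.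
Proof.
move=> n0.
have n0' : (n%:R : R) != 0 by rewrite pnatr_eq0 -lt0n.
case: ifP => dvd.
  rewrite -(divnK dvd).
  under eq_bigr => t _.
    have -> : t%:R * (pi *+ 2 * (m %/ n * n)%:R / n%:R) = (pi *+ 2) *+ (t * (m %/ n)) :> R.
      rewrite -mulr_natr !natrM; field => //.
    rewrite cos_2pin.
  over.
  by rewrite sumr_const card_ord.
set th : R := pi *+ 2 * m%:R / n%:R.
pose F (t : nat) := sin (t%:R * th - th / 2).
have key : forall t : nat, 2 * sin (th / 2) * cos (t%:R * th) = F t.+1 - F t.
  move=> t; rewrite /F.
  have -> : t.+1%:R * th - th / 2 = t%:R * th + th / 2 by rewrite -addn1 natrD; field.
  rewrite sinD sinB; ring.
have : 2 * sin (th / 2) * \sum_(t < n) cos (t%:R * th) = 0.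
  rewrite mulr_sumr.
  under eq_bigr => t _ do rewrite key.
  rewrite -(big_mkord xpredT (fun t => F t.+1 - F t)) telescope_sumr // /F.
  have -> : n%:R * th - th / 2 = - (th / 2) + (pi *+ 2) *+ m.
    rewrite /th -mulr_natr; field => //.
  rewrite (periodicn (@sinD2pi R)) mul0r add0r; ring.
move/eqP; rewrite mulf_eq0 => /orP [|/eqP //].
rewrite mulf_eq0 pnatr_eq0 /=.
have -> : th / 2 = pi * m%:R / n%:R by rewrite /th -mulr_natr; field.
by rewrite (negPf (@sin_ne0 R n m n0 (negbT dvd))).
Qed.
End Trig2.

Section Trig3.
Variable R : realType.

Lemma sin_ge0_n (y : R) (k : nat) : 0 <= y -> k%:R * y <= pi -> 0 <= sin (k%:R * y).
Proof. move=> y0 ky; apply: sin_ge0_pi; rewrite ky andbT mulr_ge0 //. Qed.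

Lemma cos_pow (y : R) (u : nat) : 0 <= y -> 0 <= cos y -> u%:R * y <= pi ->
  cos (u%:R * y) <= cos y ^+ u.
Proof.
move=> y0 cy0; elim: u => [|u IH] h.
  by rewrite mul0r cos0 expr0.
have hu : u%:R * y <= pi.
  apply: le_trans h; rewrite ler_wpM2r // ler_nat; exact: leqnSn.
have hy : y <= pi.
  apply: le_trans h; rewrite -[X in X <= _]mul1r ler_wpM2r // ler1n //.
have -> : u.+1%:R * y = u%:R * y + y by rewrite -addn1 natrD; ring.
rewrite cosD exprS.
have s1 : 0 <= sin (u%:R * y) by apply: sin_ge0_n.
have s2 : 0 <= sin y by apply: sin_ge0_pi; rewrite y0 hy.
have := IH hu => IH'.
have : cos (u%:R * y) * cos y <= cos y ^+ u * cos y by rewrite ler_wpM2r.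
nra.
Qed.

Lemma sin_mul_le (y : R) (k : nat) : 0 <= y -> k%:R * y <= pi ->
  sin (k%:R * y) <= k%:R * sin y.
Proof.
move=> y0; elim: k => [|k IH] h.
  by rewrite !mul0r sin0.
have hu : k%:R * y <= pi.
  apply: le_trans h; rewrite ler_wpM2r // ler_nat; exact: leqnSn.
have hy : y <= pi.
  apply: le_trans h; rewrite -[X in X <= _]mul1r ler_wpM2r // ler1n //.
have -> : k.+1%:R * y = k%:R * y + y by rewrite -addn1 natrD; ring.
rewrite sinD -addn1 natrD mulrDl mul1r.
have s1 : 0 <= sin (k%:R * y) by apply: sin_ge0_n.
have s2 : 0 <= sin y by apply: sin_ge0_pi; rewrite y0 hy.
have := IH hu => IH'.
have c1 := cos_le1 y; have c2 := cos_le1 (k%:R * y).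
nra.
Qed.

Lemma cos_pin_le (n : nat) : (0 < n)%N -> cos (pi / n%:R) <= 1 - 2 / (n%:R ^+ 2) :> R.
Proof.
move=> n0.
have n0' : (0 : R) < n%:R by rewrite ltr0n.
pose y : R := pi / (2 * n%:R).
have y0 : 0 <= y by rewrite /y divr_ge0 ?pi_ge0 // mulr_ge0 // ltW.
have ny : n%:R * y = pi / 2 by rewrite /y; field; rewrite gt_eqF.
have : sin (n%:R * y) <= n%:R * sin y.
  apply: sin_mul_le => //; rewrite ny ler_pdivrMr // ler_peMr ?pi_ge0 // ler1n //.
rewrite ny sin_pihalf => hs.
have -> : pi / n%:R = y *+ 2 by rewrite /y -mulr_natr; field; rewrite gt_eqF.
rewrite cos_mulr2n cos2sin2.
have hs' : n%:R^-1 <= sin y by rewrite -(ler_pM2l n0') mulfV ?gt_eqF.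
have hn0 : 0 <= n%:R^-1 :> R by rewrite invr_ge0 ltW.
have : n%:R^-1 ^+ 2 <= sin y ^+ 2 by rewrite lerXn2r // nnegrE (le_trans hn0 hs').
rewrite exprVn => h2.
lra.
Qed.
End Trig3.
Section Alg.
Variable R : realType.

Lemma geom_sum (q : R) (N : nat) :
  (1 - q) * \sum_(t < N) q ^+ t.+1 = q - q ^+ N.+1.
Proof.
elim: N => [|N IH]; first by rewrite big_ord0 mulr0 expr1 subrr.
rewrite big_ord_recr /= mulrDr IH !exprS; ring.
Qed.

Lemma binom_lb (a : R) (s : nat) : 0 <= a ->
  1 + s%:R * a + ('C(s, 2))%:R * a ^+ 2 <= (1 + a) ^+ s.
Proof.
move=> a0; elim: s => [|s IH]; first by rewrite bin_small // !mul0r !addr0 expr0.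
rewrite binS bin1 natrD (exprS (1 + a)).
have h1 : 0 <= 1 + a by lra.
have := ler_wpM2l h1 IH => h2.
have h3 : 0 <= ('C(s, 2))%:R * (a * a * a) by rewrite mulr_ge0 // !mulr_ge0.
apply: (le_trans _ h2); rewrite -addn1 natrD expr2.
set C := ('C(s, 2))%:R in h2 h3 *.
rewrite expr2 in h2; nra.
Qed.

Lemma q_bound (c : R) (n s : nat) : (0 < n)%N -> (2 <= s)%N -> 0 <= c ->
  c <= 1 - 2 / n%:R ^+ 2 ->
  c ^+ s * (1 + s%:R / n%:R ^+ 2) ^+ 2 <= 1.
Proof.
move=> n0 s2 c0 hc.
have n0' : (0 : R) < n%:R by rewrite ltr0n.
set a : R := 2 / n%:R ^+ 2.
have a0 : 0 <= a by rewrite /a divr_ge0 // exprn_ge0 // ltW.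
have hx : 1 + s%:R / n%:R ^+ 2 = 1 + s%:R * a / 2 by rewrite /a; field; rewrite gt_eqF.
rewrite hx.
have h1 : (1 + s%:R * a / 2) ^+ 2 <= (1 + a) ^+ s.
  apply: le_trans (@binom_lb a s a0).
  have hC : (2 * 'C(s, 2) = s * s.-1)%N by rewrite -(mul_bin_diag s 1) bin1.
  have hCR : 2 * ('C(s, 2))%:R = s%:R * (s.-1)%:R :> R.
    by have := congr1 (fun k : nat => k%:R : R) hC; rewrite !natrM.
  have hs : s%:R = (s.-1)%:R + 1 :> R by rewrite natr1 prednK // (leq_trans _ s2).
  have hm : 1 <= (s.-1)%:R :> R by rewrite ler1n -ltnS prednK // (leq_trans _ s2).
  set C := ('C(s, 2))%:R in hCR *.
  set m := (s.-1)%:R in hs hm hCR.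
  rewrite hs in hCR *.
  have a2 : 0 <= a * a by nra.
  have hC2 : C = (m + 1) * m / 2 by lra.
  rewrite hC2.
  have hh : 0 <= (a * a) * ((m + 1) * (m - 1)) by apply: mulr_ge0 => //; nra.
  rewrite !expr2; nra.
have hca : c ^+ s <= (1 - a) ^+ s.
  by rewrite lerXn2r // nnegrE // (le_trans c0 hc).
have h1a : 0 <= 1 - a by apply: le_trans hc.
have : (1 - a) ^+ s * (1 + a) ^+ s <= 1.
  rewrite -exprMn; apply: exprn_ile1; first by rewrite mulr_ge0 //; lra.
  nra.
move=> h3.
apply: le_trans h3.
apply: (le_trans (y := (1 - a) ^+ s * (1 + s%:R * a / 2) ^+ 2)).
  by apply: ler_wpM2r => //; exact: sqr_ge0.
by apply: ler_wpM2l => //; exact: exprn_ge0.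
Qed.
End Alg.
Section Alg2.
Variable R : realType.
Lemma final_comb (E G q z : R) : 1 <= z -> 0 <= q -> E <= 2 * G ->
  (1 - q) * G <= q -> q * (1 + z ^+ 2) ^+ 2 <= 1 -> E * (2 + 4 / z) <= 4 / z.
Proof.
move=> z1 q0 hE hG hq.
have hz : z + 3 <= (1 + z ^+ 2) ^+ 2.
  rewrite !expr2; have : 0 <= (z - 1) * (z - 1) by nra. nra.
have h1 : q * (z + 3) <= 1.
  apply: le_trans hq; rewrite ler_wpM2l //.
have hq4 : q * 4 <= 1 by nra.
have h2 : (1 - q) * (G * (z + 2)) <= (1 - q) * 1 by nra.
have h3 : G * (z + 2) <= 1.
  by move: h2; rewrite ler_pM2l //; lra.
have h4 : E * (z + 2) <= 2 by nra.
have z0 : 0 < z by lra.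
have -> : E * (2 + 4 / z) = (E * (z + 2)) * (2 / z) by field; rewrite gt_eqF.
have -> : 4 / z = 2 * (2 / z) by field; rewrite gt_eqF.
rewrite ler_wpM2r // divr_ge0 //; lra.
Qed.
End Alg2.

Section Four.
Variable R : realType.

Definition Sres (n s j : nat) : R :=
  \sum_(k < s.+1) ('C(s, k))%:R * ((k == j %[mod n])%N : nat)%:R.

Lemma cos_orth2 (n k j : nat) : (0 < n)%N ->
  \sum_(t < n) cos (t%:R * (pi *+ 2 * (k%:R - j%:R) / n%:R))
  = ((k == j %[mod n])%N : nat)%:R * n%:R :> R.
Proof.
move=> n0.
wlog hjk : k j / (j <= k)%N.
  move=> W; case: (leqP j k) => h; first exact: W.
  rewrite eq_sym -W; last exact: ltnW.
  apply: eq_bigr => t _; rewrite -cosN; congr cos; ring.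
rewrite -natrB // cos_orth // eqn_mod_dvd //.
by case: ifP; rewrite ?mul1r ?mul0r.
Qed.

Lemma fourier (n s j : nat) : (0 < n)%N ->
  n%:R * Sres n s j = \sum_(t < n)
    (2 * cos (pi *+ 2 * t%:R / n%:R / 2)) ^+ s *
    cos (s%:R * (pi *+ 2 * t%:R / n%:R) / 2 + - (j%:R * (pi *+ 2 * t%:R / n%:R))).
Proof.
move=> n0.
have n0' : (n%:R : R) != 0 by rewrite pnatr_eq0 -lt0n.
rewrite /Sres mulr_sumr.
under eq_bigr => k _.
  rewrite mulrCA (mulrC n%:R) -cos_orth2 // mulr_sumr.
over.
rewrite exchange_big /=.
apply: eq_bigr => t _.
rewrite -binom_cos.
apply: eq_bigr => k _.
congr (_ * cos _); field => //.
Qed.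

Definition Eterm (n s : nat) : R :=
  \sum_(t < n.-1) `|cos (pi * (t.+1)%:R / n%:R)| ^+ s.

Lemma S_bounds (n s j : nat) : (0 < n)%N ->
  `|n%:R * Sres n s j - 2 ^+ s| <= 2 ^+ s * Eterm n s.
Proof.
move=> n0.
have n0' : (n%:R : R) != 0 by rewrite pnatr_eq0 -lt0n.
rewrite fourier // -(prednK n0) big_ord_recl /=.
have h0 : pi *+ 2 * (0%N)%:R / (n.-1.+1)%:R = 0 :> R by rewrite mulr0n mulr0 mul0r.
rewrite h0 !mul0r mulr0 mul0r (mulr0 j%:R) subr0 cos0 mulr1 (mulr1 2) (addrC (2 ^+ s)) addrK /Eterm mulr_sumr.
apply: le_trans (ler_norm_sum _ _ _) _.
apply: ler_sum => t _.
rewrite normrM normrX normrM ger0_norm // -exprMn.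
have hn : (n.-1.+1)%:R = n%:R :> R by rewrite prednK.
rewrite !hn.
have -> : pi *+ 2 * (bump 0 t)%:R / n%:R / 2 = pi * (t.+1)%:R / n%:R :> R.
  by rewrite /bump /= add1n mulr2n; field.
rewrite -[X in _ <= X]mulr1 ler_wpM2l ?exprn_ge0 ?mulr_ge0 //.
exact: cos_max.
Qed.

Lemma term_bound (n s u : nat) : (1 < n)%N -> (0 < u)%N -> (u < n)%N ->
  `|cos (pi * u%:R / n%:R)| ^+ s
   <= (cos (pi / n%:R) ^+ s) ^+ u + (cos (pi / n%:R) ^+ s) ^+ (n - u) :> R.
Proof.
move=> n1 u0 un.
have n0' : (0 : R) < n%:R by rewrite ltr0n (ltn_trans _ n1).
set y : R := pi / n%:R.
have y0 : 0 <= y by rewrite /y divr_ge0 ?pi_ge0 // ltW.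
have ypi : y <= pi / 2.
  rewrite /y ler_pdivrMr // mulrAC ler_pdivlMr // ler_pM2l ?pi_gt0 //.
  by rewrite (ler_nat R 2 n).
have cy0 : 0 <= cos y by apply: cos_ge0_pihalf; rewrite ypi andbT; apply: le_trans y0; rewrite lerNl oppr0 divr_ge0 ?pi_ge0.
have hu : pi * u%:R / n%:R = u%:R * y by rewrite /y; field; rewrite gt_eqF.
have hnu : (n - u)%:R * y = pi - u%:R * y.
  rewrite natrB; last exact: ltnW.
  by rewrite /y; field; rewrite gt_eqF.
have upi : u%:R * y <= pi.
  have ny : n%:R * y = pi by rewrite /y; field; rewrite gt_eqF.
  rewrite -[X in _ <= X]ny ler_wpM2r // ler_nat; exact: ltnW.
have nupi : (n - u)%:R * y <= pi.
  rewrite hnu; have : 0 <= u%:R * y by rewrite mulr_ge0. lra.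
have hq0 : forall k, 0 <= (cos y ^+ s) ^+ k by move=> k; rewrite !exprn_ge0.
have hq : forall k, (cos y ^+ s) ^+ k = (cos y ^+ k) ^+ s by move=> k; rewrite exprAC.
rewrite hu.
have [cpos|cneg] := leP 0 (cos (u%:R * y)).
  rewrite ger0_norm // !hq.
  apply: (le_trans (y := (cos y ^+ u) ^+ s)).
    by rewrite lerXn2r // ?nnegrE ?exprn_ge0 // cos_pow.
  by rewrite lerDl exprn_ge0 // exprn_ge0.
rewrite ltr0_norm // !hq.
have -> : - cos (u%:R * y) = cos ((n - u)%:R * y) by rewrite hnu cosB cospi sinpi; ring.
apply: (le_trans (y := (cos y ^+ (n - u)) ^+ s)).
  rewrite lerXn2r // ?nnegrE ?exprn_ge0 // ?cos_pow //.
  rewrite hnu cosB cospi sinpi mul0r addr0 mulN1r; lra.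
by rewrite lerDr exprn_ge0 // exprn_ge0.
Qed.

Lemma E_bound (n s : nat) : (1 < n)%N ->
  Eterm n s <= 2 * \sum_(t < n.-1) (cos (pi / n%:R) ^+ s) ^+ t.+1 :> R.
Proof.
move=> n1.
set q := cos (pi / n%:R) ^+ s.
apply: (le_trans (y := \sum_(t < n.-1) (q ^+ t.+1 + q ^+ (n - t.+1)))).
  apply: ler_sum => t _; apply: term_bound => //.
  have := ltn_ord t; lia.
rewrite big_split /=.
have -> : \sum_(t < n.-1) q ^+ (n - t.+1) = \sum_(t < n.-1) q ^+ t.+1.
  rewrite (reindex_inj rev_ord_inj) /=.
  apply: eq_bigr => t _; congr (_ ^+ _).
  have := ltn_ord t; rewrite /=; lia.
lra.
Qed.

Lemma ratio (n s j j' : nat) : (1 < n)%N -> (n ^ 2 <= s)%N ->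
  Sres n s j <= (1 + 4 * n%:R / Num.sqrt s%:R) * Sres n s j'.
Proof.
move=> n1 hs.
have n0 : (0 < n)%N by apply: ltn_trans n1.
have n0' : (0 : R) < n%:R by rewrite ltr0n.
have s2 : (2 <= s)%N.
  apply: leq_trans hs; rewrite (leq_trans n1) // -{1}(expn1 n) leq_pexp2l //.
set A : R := 2 ^+ s.
have A0 : 0 < A by rewrite /A exprn_gt0.
have := S_bounds n s j n0; rewrite ler_distl => /andP[_ hj].
have := S_bounds n s j' n0; rewrite ler_distl => /andP[hj' _].
set E := Eterm n s in hj hj'.
set c : R := cos (pi / n%:R).
set q : R := c ^+ s.
have c0 : 0 <= c.
  apply: cos_ge0_pihalf; apply/andP; split.
    have h1 : 0 <= pi / n%:R :> R by rewrite divr_ge0 ?pi_ge0 // ltW.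
    have h2 : 0 <= pi / 2 :> R by rewrite divr_ge0 ?pi_ge0.
    lra.
  rewrite ler_pdivrMr // mulrAC ler_pdivlMr // ler_pM2l ?pi_gt0 //.
  by rewrite (ler_nat R 2 n).
have q0 : 0 <= q by rewrite exprn_ge0.
have hE := E_bound n s n1.
set G := \sum_(t < n.-1) q ^+ t.+1 in hE.
have hG : (1 - q) * G <= q.
  rewrite /G geom_sum; have : 0 <= q ^+ n.-1.+1 by rewrite exprn_ge0. lra.
have hq := q_bound R c n s n0 s2 c0 (cos_pin_le R n n0).
fold q in hq.
set r := Num.sqrt s%:R.
have r2 : r ^+ 2 = s%:R by rewrite sqr_sqrtr // ler0n.
have r0 : 0 < r by rewrite sqrtr_gt0 ltr0n (leq_trans _ s2).
set z := r / n%:R.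
have z2 : z ^+ 2 = s%:R / n%:R ^+ 2 by rewrite /z exprMn exprVn r2.
have z1 : 1 <= z.
  have zz : 1 <= z ^+ 2.
    rewrite z2 ler_pdivlMr ?exprn_gt0 // mul1r -natrX ler_nat //.
  have : 0 <= z by rewrite /z divr_ge0 // ltW.
  rewrite expr2 in zz; nra.
rewrite -z2 in hq.
have fc := final_comb R _ _ _ _ z1 q0 hE hG hq.
have he : 4 / z = 4 * n%:R / r by rewrite /z; field; rewrite !gt_eqF.
rewrite he in fc; fold E in fc.
set eps := 4 * n%:R / r in fc *.
have eps0 : 0 <= eps by rewrite /eps divr_ge0 // ?mulr_ge0 // ltW.
have key : A * (1 + E) <= (1 + eps) * (A * (1 - E)).
  rewrite mulrCA; apply: ler_wpM2l; [exact: ltW | nra].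
rewrite -(ler_pM2l n0') mulrCA.
apply: le_trans hj _.
apply: (le_trans (y := (1 + eps) * (A * (1 - E)))).
  by move: key; rewrite /A mulrDr mulr1.
apply: ler_wpM2l; first lra.
by rewrite /A mulrBr mulr1.
Qed.
End Four.
End H.
Import H.

Lemma pascal_sum (f : nat -> nat) s :
  (\sum_(k < s.+2) 'C(s.+1, k) * f k
   = \sum_(k < s.+1) 'C(s, k) * f k + \sum_(k < s.+1) 'C(s, k) * f k.+1)%N.
Proof.
rewrite big_ord_recl bin0 mul1n.
under eq_bigr => i _ do rewrite binS mulnDl.
rewrite big_split /= addnA.
congr (_ + _).
transitivity (\sum_(i < s.+2) 'C(s, i) * f i)%N; last first.
  by rewrite big_ord_recr /= bin_small // mul0n addn0.
by rewrite [in RHS]big_ord_recl /= bin0 mul1n.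
Qed.

Section Comb.
Variable T : nat.
Variable b : 'Z_T.
Hypothesis hb : b != 0%R.

Definition Bset : mset 'Z_T := mset_of_set [set 0%R; b].
Definition mu (s : nat) : mset 'Z_T := msum_seq (nseq s Bset).

Lemma sum_shift (f : mset 'Z_T) (a x : 'Z_T) :
  (\sum_(c : 'Z_T) ((a + c == x)%R * f c) = f (x - a)%R)%N.
Proof.
rewrite (bigD1 (x - a)%R) //= addrC subrK eqxx mul1n big1 ?addn0 //.
move=> c hc; case: eqP => [e|_]; last by rewrite mul0n.
by move: hc; rewrite -e (addrC a c) addrK eqxx.
Qed.

Lemma mu_step (s : nat) (x : 'Z_T) : mu s.+1 x = (mu s x + mu s (x - b)%R)%N.
Proof.
rewrite /mu /= /msum.
under eq_bigr => a _.
  under eq_bigr => c _ do rewrite mulnCA.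
  rewrite -big_distrr /= sum_shift.
over.
rewrite /= (bigD1 0%R) //= (bigD1 b) //= ?big1 ?addn0.
- by rewrite /Bset /mset_of_set !inE !eqxx orbT subr0 !mul1n.
- move=> a /andP [ha0 hab]; rewrite /Bset /mset_of_set !inE.
  by rewrite (negPf ha0) (negPf hab).
Qed.

Lemma mu_formula (s : nat) (x : 'Z_T) :
  mu s x = (\sum_(k < s.+1) 'C(s, k) * ((b *+ k)%R == x))%N.
Proof.
elim: s x => [|s IH] x.
  rewrite big_ord_recl big_ord0 addn0 bin0 mul1n /= mulr0n.
  by rewrite /mu /= /mset_of_set !inE eq_sym.
rewrite mu_step !IH (pascal_sum (fun k => nat_of_bool ((b *+ k)%R == x))).
congr (_ + _); apply: eq_bigr => k _; congr (_ * nat_of_bool _).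
apply/eqP/eqP => e; first by rewrite mulrS e addrC subrK.
by rewrite -e mulrS addrC addrK.
Qed.
End Comb.

Theorem lemma6 (R : realType) (T : nat) (hT : (1 < T)%N) (b : 'Z_T)
  (hb : b != 0%R) (s : nat) (hs : (T ^ 2 <= s)%N) :
  bias_at_most
    (msum_seq (nseq s (mset_of_set [set 0%R; b])))
    <[b]>%g
    ((4 * (#|<[b]>%g|)%:R / Num.sqrt (s%:R)) : R)%R.
Proof.
move=> a Ha h Hh.

have F := mu_formula T b hb s.
rewrite /mu /Bset in F.
set n := #|<[b]>%g|.
have n1 : (1 < n)%N.
  rewrite ltn_neqAle order_gt0 andbT eq_sym order_eq1; exact: hb.
have nT : (n <= T)%N.
  apply: leq_trans (max_card _) _; by rewrite card_ord Zp_cast.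
have hs' : (n ^ 2 <= s)%N by apply: leq_trans hs; rewrite leq_exp2r.
have [k0 Hk0] : exists k0 : nat, (b *+ k0)%R = a.
  case: (pickP (fun k : 'I_s.+1 => (b *+ k)%R == a)) => [k /eqP e| none]; first by exists k.
  by move: Ha; rewrite F big1 // => k _; rewrite none muln0.
case/cycleP: Hh => i ->.
have E : forall j : nat,
    ((msum_seq (nseq s (mset_of_set [set 0%R; b])) (b *+ j)%R)%:R = Sres R n s j)%R.
  move=> j; rewrite F /Sres natr_sum; apply: eq_bigr => k _.
  rewrite natrM; congr (_ * _%:R)%R.
  by rewrite -(eq_expg_mod_order b k j).
have -> : (a + (b ^+ i)%g)%R = (b *+ (k0 + i))%R by rewrite -Hk0 mulrnDr.
rewrite -Hk0 !E.
exact: ratio.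
Qed.
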